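(* Let $\sigma$ be a finite Borel measure on $(-\pi,\pi)$ with $\sigma\perp\lambda$, and let $\sigma^\#=\sigma((-\pi,\pi))\,\delta_0$ be its symmetrization. Then $u_\sigma^\star(t)\le u_{\sigma^\#}^\star(t)$ for all $t\in[0,2\pi]$.
   Context: $\lambda$ is Lebesgue measure; $\delta_0$ the unit Dirac mass at $0$. $G(x,y)=-\frac{xy}{2\pi}-\frac12|x-y|+\frac{\pi}{2}$ on $[-\pi,\pi]^2$, $u_\mu(x)=\int G(x,y)\,d\mu(y)$. For $g\in L^1[-\pi,\pi]$, the star function is $g^\star(t)=\sup\{\int_E g\,d\lambda: E\subset[-\pi,\pi]\text{ Borel},\ \lambda(E)=t\}$ for $t\in[0,2\pi]$. *)

(* Defs.v *)
From HB Require Import structures.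
From mathcomp Require Import all_boot all_order all_algebra.
From mathcomp Require Import all_classical all_reals all_analysis.
Set Implicit Arguments. Unset Strict Implicit. Unset Printing Implicit Defensive.
Import Order.TTheory GRing.Theory Num.Theory.
Local Open Scope classical_set_scope.
Local Open Scope ring_scope.

Definition G {R : realType} (x y : R) : R :=
  - (x * y) / (2 * pi) - `|x - y| / 2 + pi / 2.

Definition upot {R : realType}
  (mu : {measure set (measurableTypeR R) -> \bar R}) (x : R) : \bar R :=
  (\int[mu]_(y in `](- pi)%R, (pi : R)[) (G x y)%:E)%E.

Definition star {R : realType} (g : R -> \bar R) (t : R) : \bar R :=
  ereal_sup [set (\int[@lebesgue_measure R]_(x in E) g x)%E
            | E in [set E : set (measurableTypeR R) |
                     [/\ measurable E, E `<=` `[(- pi)%R, (pi : R)] &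
                         @lebesgue_measure R E = t%:E]]].

Definition singular_lebesgue {R : realType}
  (mu : {measure set (measurableTypeR R) -> \bar R}) : Prop :=
  exists N : set (measurableTypeR R),
    [/\ measurable N, @lebesgue_measure R N = 0%E & mu (~` N) = 0%E].

(* Main.v *)
Require Import Defs.
From HB Require Import structures.
From mathcomp Require Import all_boot all_order all_algebra.
From mathcomp Require Import all_classical all_reals all_analysis.
From mathcomp Require Import ring lra measurable_realfun.
Import Order.TTheory GRing.Theory Num.Theory numFieldNormedType.Exports.
Local Open Scope classical_set_scope.
Local Open Scope ring_scope.

Section S.
Context {R : realType}.
Notation mu := (@lebesgue_measure R).

Let pi0 : (0 : R) < pi. Proof. exact: pi_gt0. Qed.

Lemma Gl (x y : R) : x <= y -> G x y = (pi + x) * (pi - y) / (2 * pi).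
Proof.
move=> xy; rewrite /G ler0_norm; last by rewrite subr_le0.
move: (pi : R) pi0 => p p0; have ? : p != 0 by rewrite gt_eqF.
by field.
Qed.

Lemma Gr (x y : R) : y <= x -> G x y = (pi - x) * (pi + y) / (2 * pi).
Proof.
move=> xy; rewrite /G ger0_norm; last by rewrite subr_ge0.
move: (pi : R) pi0 => p p0; have ? : p != 0 by rewrite gt_eqF.
by field.
Qed.

Lemma G_ge0 (x y : R) : - pi <= x <= pi -> - pi <= y <= pi -> 0 <= G x y.
Proof.
move=> /andP[x1 x2] /andP[y1 y2].
have p2 : 0 < 2 * pi :> R by rewrite mulr_gt0.
case: (lerP x y) => xy; [rewrite Gl // | rewrite Gr; last exact: ltW];
  (apply: divr_ge0; last exact: ltW); apply: mulr_ge0; lra.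
Qed.

Definition hh (y : R) := (pi + y) * (pi - y) / (2 * pi).

Lemma G_le_h (x y : R) : - pi <= y <= pi -> G x y <= hh y.
Proof.
move=> /andP[y1 y2].
have p2 : 0 < 2 * pi :> R by rewrite mulr_gt0.
rewrite /hh; case: (lerP x y) => xy; [rewrite Gl // | rewrite Gr; last exact: ltW];
  rewrite ler_pM2r ?invr_gt0 //; nra.
Qed.


Lemma Fder (al be x : R) :
  is_derive x 1 (fun z : R => (al / 2) *: (z ^+ 2) + be *: z) (al * x + be).
Proof.
apply: is_derive_eq.
rewrite /GRing.scale /= !mulr1.
by field.
Qed.

Lemma Fcont (al be : R) : continuous (fun z : R => (al / 2) *: (z ^+ 2) + be *: z).
Proof.
move=> x; apply: differentiable_continuous; apply/derivable1_diffP.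
have H := Fder al be x; exact: ex_derive.
Qed.

Lemma fcont (al be : R) : continuous (fun z : R => al * z + be).
Proof.
move=> x; apply: differentiable_continuous; apply/derivable1_diffP.
have : is_derive x 1 (fun z : R => al * z + be) al.
  by apply: is_derive_eq; rewrite addr0 /GRing.scale /= mulr1.
move=> H; exact: ex_derive.
Qed.

Lemma int_aff (a b al be : R) : a <= b ->
  (\int[mu]_(x in `[a, b]) (al * x + be)%:E =
   ((b - a) * ((al * a + be) + (al * b + be)) / 2)%:E)%E.
Proof.
rewrite le_eqVlt => /predU1P[<-|ab].
  by rewrite set_itv1 integral_set1 subrr !mul0r.
rewrite (@continuous_FTC2 _ _ (fun z : R => (al / 2) *: (z ^+ 2) + be *: z)) //.
- rewrite -EFinB; congr (_%:E); rewrite /GRing.scale /=; field; exact: isT.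
- exact/continuous_subspaceT/fcont.
- split.
  + move=> x _; have H := Fder al be x; exact: ex_derive.
  + apply: cvg_at_right_filter; exact: Fcont.
  + apply: cvg_at_left_filter; exact: Fcont.
- by move=> x _; have H := Fder al be x; rewrite derive1E derive_val.
Qed.

Lemma int_piece (a b al be : R) (f : R -> R) : a <= b ->
  (forall x, a <= x <= b -> f x = al * x + be) ->
  (\int[mu]_(x in `[a, b]) (f x)%:E = ((b - a) * (f a + f b) / 2)%:E)%E.
Proof.
move=> ab fE.
transitivity (\int[mu]_(x in `[a, b]) (al * x + be)%:E)%E.
  by apply: eq_integral => x; rewrite inE /= in_itv /= => /fE ->.
by rewrite int_aff // !fE ?lexx ?ab.
Qed.

Lemma int_split (a m b : R) (f : R -> \bar R) : a <= m -> m <= b ->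
  measurable_fun `[a, b]%classic f -> (forall x, a <= x <= b -> (0 <= f x)%E) ->
  (\int[mu]_(x in `[a, b]) f x =
   \int[mu]_(x in `[a, m]) f x + \int[mu]_(x in `[m, b]) f x)%E.
Proof.
move=> am mb mf f0.
have E : `[a, b]%classic = `[a, m]%classic `|` `]m, b]%classic :> set R.
  by apply: itv_bndbnd_setU; rewrite bnd_simp.
have sub1 : `]m, b]%classic `<=` `[a, b]%classic.
  by rewrite E; apply: subsetUr.
rewrite E ge0_integral_setU //; last 3 first.
- by rewrite -E.
- by move=> x; rewrite -E /= in_itv /= => /f0.
- rewrite disj_set2E; apply/eqP/seteqP; split => // x [] /=.
  rewrite !in_itv /= => /andP[_ h1] /andP[h2 _]; lra.
congr (_ + _)%E; apply: integral_itv_obnd_cbnd.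
exact: measurable_funS mf.
Qed.

Lemma measurable_G d (T : measurableType d) (f g : T -> R) :
  measurable_fun setT f -> measurable_fun setT g ->
  measurable_fun setT (fun z => G (f z) (g z)).
Proof.
move=> mf mg; rewrite /G.
apply: measurable_funD; last exact: measurable_cst.
apply: measurable_funB.
- apply: measurable_funM; last exact: measurable_cst.
  by apply: measurable_funN; apply: measurable_funM.
- apply: measurable_funM; last exact: measurable_cst.
  apply: measurableT_comp; first exact: normr_measurable.
  exact: measurable_funB.
Qed.

Lemma mGx (y : R) : measurable_fun setT (fun x : R => G x y).
Proof. apply: measurable_G; [exact: measurable_id | exact: measurable_cst]. Qed.

Lemma G_mono_l (x1 x2 y : R) : y <= pi -> x1 <= x2 -> x2 <= y -> G x1 y <= G x2 y.
Proof.
move=> y2 x12 x2y.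
have p2 : 0 < 2 * pi :> R by rewrite mulr_gt0.
rewrite !Gl //; last exact: le_trans x2y.
rewrite ler_pM2r ?invr_gt0 //; nra.
Qed.

Lemma G_mono_r (x1 x2 y : R) : - pi <= y -> y <= x1 -> x1 <= x2 -> G x2 y <= G x1 y.
Proof.
move=> y1 yx1 x12.
have p2 : 0 < 2 * pi :> R by rewrite mulr_gt0.
rewrite !Gr //; last exact: le_trans x12.
rewrite ler_pM2r ?invr_gt0 //; nra.
Qed.

Lemma Gl_aff (x y c : R) : x <= y ->
  G x y - c = (pi - y) / (2 * pi) * x + ((pi - y) / 2 - c).
Proof.
move=> xy; rewrite Gl //.
move: (pi : R) pi0 => P P0; have ? : P != 0 by rewrite gt_eqF.
by field.
Qed.

Lemma Gr_aff (x y c : R) : y <= x ->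
  G x y - c = - (pi + y) / (2 * pi) * x + ((pi + y) / 2 - c).
Proof.
move=> xy; rewrite Gr //.
move: (pi : R) pi0 => P P0; have ? : P != 0 by rewrite gt_eqF.
by field.
Qed.

Lemma Gp_val (y c : R) : y < pi -> c <= hh y ->
  G (- pi + 2 * pi * c / (pi - y)) y = c.
Proof.
move=> y2 ch.
have yp : 0 < pi - y by rewrite subr_gt0.
have ple : - pi + 2 * pi * c / (pi - y) <= y.
  rewrite -lerBrDl opprK ler_pdivrMr // mulrC.
  move: ch; rewrite /hh ler_pdivlMr ?mulr_gt0 //.
  by rewrite [y + pi]addrC.
rewrite Gl //.
move: (pi : R) pi0 yp => P P0 yp; have ? : P != 0 by rewrite gt_eqF.
have ? : P - y != 0 by rewrite gt_eqF.
by field; apply/andP.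
Qed.

Lemma Gq_val (y c : R) : - pi < y -> c <= hh y ->
  G (pi - 2 * pi * c / (pi + y)) y = c.
Proof.
move=> y1 ch.
have yp : 0 < pi + y by lra.
have ple : y <= pi - 2 * pi * c / (pi + y).
  rewrite lerBrDr -lerBrDl ler_pdivrMr // mulrC.
  move: ch; rewrite /hh ler_pdivlMr ?mulr_gt0 //.
  by rewrite [(pi - y) * _]mulrC.
rewrite Gr //.
move: (pi : R) pi0 yp => P P0 yp; have ? : P != 0 by rewrite gt_eqF.
have ? : P + y != 0 by rewrite gt_eqF.
by field; apply/andP.
Qed.

Lemma final_ineq (c h t : R) : 0 <= c -> c < h -> h <= pi / 2 -> c = pi / 2 - t / 4 ->
  c * t + pi * (h - c) ^+ 2 / h <= t * pi / 2 - t ^+ 2 / 8.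
Proof.
move=> c0 ch hp ct.
have h0 : 0 < h by apply: le_lt_trans ch.
have key : pi * (h - c) ^+ 2 / h <= t ^+ 2 / 8.
  rewrite ler_pdivrMr //.
  have H1 : 0 <= (pi / 2 - h) * (h * (pi / 2) - c ^+ 2).
    apply: mulr_ge0; first lra.
    have : c ^+ 2 <= h ^+ 2 by rewrite ler_pXn2r // ?nnegrE; lra.
    have : h ^+ 2 <= h * (pi / 2) by rewrite expr2 ler_pM2l.
    lra.
  have -> : t = 2 * pi - 4 * c by lra.
  nra.
have -> : t * pi / 2 - t ^+ 2 / 8 = c * t + t ^+ 2 / 8.
  by rewrite ct; field.
lra.
Qed.

Lemma qp_id (y c : R) : - pi < y < pi ->
  (pi - 2 * pi * c / (pi + y) - (- pi + 2 * pi * c / (pi - y))) * (hh y - c) / 2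
  = pi * (hh y - c) ^+ 2 / hh y.
Proof.
move=> /andP[y1 y2]; rewrite /hh.
have : 0 < pi + y by lra.
have : 0 < pi - y by lra.
move: (pi : R) pi0 => P P0 ym yp.
have ? : P != 0 by rewrite gt_eqF.
have ? : P + y != 0 by rewrite gt_eqF.
have ? : P - y != 0 by rewrite gt_eqF.
by field; apply/and3P.
Qed.

Lemma per_y (y t : R) (E : set R) : - pi < y < pi -> 0 <= t <= 2 * pi ->
  measurable E -> E `<=` `[- pi, pi]%classic -> mu E = t%:E ->
  (\int[mu]_(x in E) (G x y)%:E <= (t * pi / 2 - t ^+ 2 / 8)%:E)%E.
Proof.
move=> /andP[y1 y2] /andP[t0 t2] mE EJ muE.
have P0 := pi0.
pose c := pi / 2 - t / 4.
have c0 : 0 <= c by rewrite /c; lra.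
have hle : hh y <= pi / 2.
  rewrite /hh ler_pdivrMr ?mulr_gt0 //; nra.
have yJ : - pi <= y <= pi by apply/andP; split; lra.
have mGE : measurable_fun E (fun x => (G x y)%:E).
  apply/measurable_EFinP; exact: measurable_funS measurableT _ (mGx y).
have Gnn : forall x, E x -> (0 <= (G x y)%:E)%E.
  move=> x /EJ; rewrite /= in_itv /= => xJ; rewrite lee_fin; exact: G_ge0.
case: (lerP (hh y) c) => hc.
  apply: (@le_trans _ _ (\int[mu]_(x in E) (cst c%:E) x)%E).
    apply: ge0_le_integral => //.
    by move=> x _; rewrite lee_fin; apply: le_trans hc; apply: G_le_h.
  rewrite integral_cst // (_ : (_ * _ = (c * t)%:E)%E); last by rewrite EFinM; congr (_ * _)%E.
  rewrite lee_fin /c; nra.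
have ym : 0 < pi - y by lra.
have yp : 0 < pi + y by lra.
have hc' : c * (2 * pi) <= (pi + y) * (pi - y).
  by move: (ltW hc); rewrite /hh ler_pdivlMr ?mulr_gt0.
pose p := - pi + 2 * pi * c / (pi - y).
pose q := pi - 2 * pi * c / (pi + y).
have Gp : G p y = c := @Gp_val y c y2 (ltW hc).
have Gq : G q y = c := @Gq_val y c y1 (ltW hc).
have py : p <= y.
  rewrite /p; suff : 2 * pi * c / (pi - y) <= pi + y by lra.
  rewrite ler_pdivrMr //; nra.
have yq : y <= q.
  rewrite /q; suff : 2 * pi * c / (pi + y) <= pi - y by lra.
  rewrite ler_pdivrMr //; nra.
have pJ : - pi <= p.
  rewrite /p; suff : 0 <= 2 * pi * c / (pi - y) by lra.
  apply: divr_ge0; last exact: ltW; apply: mulr_ge0 => //; lra.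
have qJ : q <= pi.
  rewrite /q; suff : 0 <= 2 * pi * c / (pi + y) by lra.
  apply: divr_ge0; last exact: ltW; apply: mulr_ge0 => //; lra.
have bnd : forall x, G x y <= c + \1_(`[p, q]%classic) x * (G x y - c).
  move=> x; rewrite indicE; case: (boolP (x \in _)) => xin.
    by rewrite mul1r; lra.
  rewrite mul0r addr0.
  have [xp|px] := ltP x p.
    rewrite -Gp; apply: G_mono_l => //; [lra | exact: ltW].
  have [qx|xq] := ltP q x.
    rewrite -Gq; apply: G_mono_r; [lra | lra | exact: ltW].
  by case/negP: xin; apply/mem_set; rewrite /= in_itv /= px xq.
have fnn : forall x, p <= x <= q -> 0 <= G x y - c.
  move=> x /andP[px xq]; rewrite subr_ge0; case: (lerP x y) => xy.
    by rewrite -{1}Gp; apply: G_mono_l => //; lra.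
  by rewrite -{1}Gq; apply: G_mono_r => //; lra.
have mind : measurable_fun setT (fun x => \1_(`[p, q]%classic) x * (G x y - c)).
  apply: measurable_funM; first exact: measurable_indic.
  by apply: measurable_funB; [exact: mGx | exact: measurable_cst].
apply: (@le_trans _ _ (\int[mu]_(x in E) (c + \1_(`[p, q]%classic) x * (G x y - c))%:E)%E).
  apply: ge0_le_integral => //.
    apply/measurable_EFinP; apply: measurable_funS measurableT _ _ => //.
    by apply: measurable_funD => //; exact: measurable_cst.
  by move=> x _; rewrite lee_fin bnd.
have ind0 : forall x, (0 <= \1_(`[p, q]%classic) x * (G x y - c))%R.
  move=> x; rewrite indicE; case: (boolP (x \in _)) => xin; last by rewrite mul0r.
  rewrite mul1r; apply: fnn; move: xin; rewrite inE /= in_itv //.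
rewrite (_ : \int[mu]_(x in E) (c + _)%:E =
   \int[mu]_(x in E) (c%:E + (\1_(`[p, q]%classic) x * (G x y - c))%:E))%E; last first.
  by apply: eq_integral => x _; rewrite EFinD.
rewrite ge0_integralD //; last 2 first.
- by move=> x _; rewrite lee_fin.
- by apply/measurable_EFinP; apply: measurable_funS measurableT _ _.
rewrite integral_cst // (_ : (_ * _ = (c * t)%:E)%E); last by rewrite EFinM; congr (_ * _)%E.
have I2 : (\int[mu]_(x in E) (\1_(`[p, q]%classic) x * (G x y - c))%:E
            <= (pi * (hh y - c) ^+ 2 / hh y)%:E)%E.
  have mf : measurable_fun setT (fun x => (G x y - c)%:E).
    by apply/measurable_EFinP; apply: measurable_funB; [exact: mGx | exact: measurable_cst].
  have -> : (\int[mu]_(x in E) (\1_(`[p, q]%classic) x * (G x y - c))%:E =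
      \int[mu]_(x in E `&` `[p, q]%classic) (G x y - c)%:E)%E.
    rewrite integral_mkcondr; apply: eq_integral => x _.
    by rewrite /patch indicE; case: (x \in _); rewrite ?mul1r ?mul0r.
  apply: (@le_trans _ _ (\int[mu]_(x in `[p, q]%classic) (G x y - c)%:E)%E).
    apply: ge0_subset_integral.
    - exact: measurableI.
    - exact: measurable_itv.
    - exact: measurable_funS measurableT _ mf.
    - by move=> x; rewrite /= in_itv /= => /fnn; rewrite lee_fin.
    - exact: subIsetr.
  rewrite (@int_split p y q) //; last exact: measurable_funS measurableT _ mf.
  rewrite (@int_piece p y ((pi - y) / (2 * pi)) ((pi - y) / 2 - c)) //; last first.
    by move=> x /andP[_ xy]; rewrite Gl_aff.
  rewrite (@int_piece y q (- (pi + y) / (2 * pi)) ((pi + y) / 2 - c)) //; last first.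
    by move=> x /andP[yx _]; rewrite Gr_aff.
  rewrite -EFinD lee_fin Gp Gq subrr.
  have -> : G y y = hh y by rewrite Gl.
  rewrite -qp_id; last by apply/andP.
  rewrite -/p -/q add0r addr0; move: (hh y - c) => A.
  clearbody p q; rewrite le_eqVlt; apply/orP; left; apply/eqP; rewrite -mulrDl; congr (_ / 2); ring.
apply: le_trans (leeD2l _ I2) _.
rewrite -EFinD lee_fin.
apply: final_ineq => //.
Qed.

Lemma K_id (t : R) : 0 <= t ->
  (t / 2 - 0) * (G 0 0 + G (t / 2) 0) / 2 + (0 - - (t / 2)) * (G (- (t / 2)) 0 + G 0 0) / 2
  = t * pi / 2 - t ^+ 2 / 8.
Proof.
move=> t0.
rewrite (@Gl 0 0 (lexx 0)) (@Gr (t / 2) 0) ?divr_ge0 // (@Gl (- (t / 2)) 0); last first.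
  by rewrite oppr_le0 divr_ge0.
move: (pi : R) pi0 => P P0; have ? : P != 0 by rewrite gt_eqF.
by field.
Qed.

Lemma stepB (sigma sigmash : {measure set (measurableTypeR R) -> \bar R}) (t : R) :
  (sigma `](- pi)%R, (pi : R)[%classic < +oo)%E ->
  (forall A : set (measurableTypeR R), measurable A ->
     sigmash A = (sigma `](- pi)%R, (pi : R)[%classic * \d_(0%R : R) A)%E) ->
  0 <= t <= 2 * pi ->
  (\int[mu]_(x in `[(- (t / 2))%R, (t / 2)%R]%classic) upot sigmash x =
    sigma `](- pi)%R, (pi : R)[%classic * (t * pi / 2 - t ^+ 2 / 8)%:E)%E.
Proof.
move=> hfin hsh /andP[t0 t2].
have P0 := pi0.
set m := sigma _.
have m0 : (0 <= m)%E := measure_ge0 _ _.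
have mfin : m \is a fin_num by rewrite ge0_fin_numE.
have r0 : 0 <= fine m := fine_ge0 m0.
have mE : m = (fine m)%:E by rewrite fineK.
have J0 : forall x, - (t / 2) <= x <= t / 2 -> - pi <= x <= pi.
  move=> x /andP[h1 h2]; apply/andP; split; lra.
transitivity (\int[mu]_(x in `[(- (t / 2))%R, (t / 2)%R]%classic) ((fine m)%:E * (G x 0)%:E))%E.
  apply: eq_integral => x; rewrite inE /= in_itv /= => /J0 xJ.
  rewrite /upot (eq_measure_integral (mscale (NngNum r0) (@dirac _ (measurableTypeR R) (0:R) R))); last first.
    by move=> A mA _; rewrite hsh //=; congr (_ * _)%E.
  have mG0 : measurable_fun `](- pi)%R, (pi : R)[%classic (fun y => (G x y)%:E).
    apply/measurable_EFinP; apply: measurable_funS measurableT _ _ => //.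
    by apply: measurable_G; [exact: measurable_cst | exact: measurable_id].
  rewrite ge0_integral_mscale //; last first.
    move=> y; rewrite /= in_itv /= => /andP[y1 y2]; rewrite lee_fin.
    by apply: G_ge0 => //; apply/andP; split; apply: ltW.
  rewrite integral_dirac // diracE mem_set ?mul1e //=.
  by rewrite in_itv /=; apply/andP; split; lra.
rewrite ge0_integralZl_EFin //; last 2 first.
- move=> x; rewrite /= in_itv /= => /J0 xJ; rewrite lee_fin; apply: G_ge0 => //.
  by apply/andP; split; lra.
- by apply/measurable_EFinP; apply: measurable_funS measurableT _ (mGx 0).
rewrite mE; congr (_ * _)%E.
rewrite (@int_split (- (t / 2)) 0 (t / 2)); last 4 first.
- lra.
- lra.
- by apply/measurable_EFinP; apply: measurable_funS measurableT _ (mGx 0).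
- move=> x /J0 xJ; rewrite lee_fin; apply: G_ge0 => //.
  by apply/andP; split; lra.
rewrite (@int_piece (- (t / 2)) 0 ((pi - 0) / (2 * pi)) ((pi - 0) / 2 - 0)); last 2 first.
- lra.
- by move=> x /andP[_ xy]; rewrite -(subr0 (G x 0)) Gl_aff.
rewrite (@int_piece 0 (t / 2) (- (pi + 0) / (2 * pi)) ((pi + 0) / 2 - 0)); last 2 first.
- lra.
- by move=> x /andP[xy _]; rewrite -(subr0 (G x 0)) Gr_aff.
by rewrite -EFinD addrC K_id.
Qed.
End S.

Section T.
Context {R : realType}.
Notation mu := (@lebesgue_measure R).
Local Open Scope ereal_scope.
Variable sigma : {measure set (measurableTypeR R) -> \bar R}.
Hypothesis hfin : sigma `](- pi)%R, (pi : R)[%classic < +oo.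
Let mI : measurable (`](- pi)%R, (pi : R)[%classic : set (measurableTypeR R)).
Proof. exact: measurable_itv. Qed.
Let s' := mfrestr mI hfin.

Lemma stepA (t : R) (E : set R) : (0 <= t <= 2 * pi)%R -> measurable E ->
  E `<=` `[(- pi)%R, (pi : R)]%classic -> mu E = t%:E ->
  \int[mu]_(x in E) upot sigma x <=
    sigma `](- pi)%R, (pi : R)[%classic * (t * pi / 2 - t ^+ 2 / 8)%:E.
Proof.
move=> ht mE EJ muE.
set I := `](- pi)%R, (pi : R)[%classic.
pose F := fun z : (measurableTypeR R * measurableTypeR R)%type =>
  ((\1_E z.1 : R) * ((\1_I z.2 : R) * G z.1 z.2))%:E.
have mF : measurable_fun setT F.
  apply/measurable_EFinP; apply: measurable_funM.
    by apply: measurableT_comp; [exact: measurable_indic | exact: measurable_fst].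
  apply: measurable_funM.
    by apply: measurableT_comp; [exact: measurable_indic | exact: measurable_snd].
  by apply: measurable_G; [exact: measurable_fst | exact: measurable_snd].
have F0 : forall z, 0 <= F z.
  move=> [x y]; rewrite /F /= lee_fin !indicE.
  case: (boolP (x \in E)) => xE; last by rewrite mul0r.
  case: (boolP (y \in I)) => yI; last by rewrite mul0r mulr0.
  rewrite !mul1r; apply: G_ge0.
    by move: xE; rewrite inE => /EJ; rewrite /= in_itv.
  by move: yI; rewrite inE /I /= in_itv /= => /andP[? ?]; apply/andP; split; apply: ltW.
have s'E : forall A, measurable A -> A `<=` I -> sigma A = s' A.
  by move=> A mA AI; rewrite /s' /mfrestr /mrestr setIidl.
have step1 : \int[mu]_(x in E) upot sigma x = \int[mu]_x \int[s']_y F (x, y).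
  rewrite integral_mkcond; apply: eq_integral => x _; rewrite /patch.
  case: ifPn => xE.
    rewrite /upot (eq_measure_integral s') // integral_mkcond.
    apply: eq_integral => y _; rewrite /patch /F /= !indicE xE mul1r.
    by case: ifPn => _; rewrite ?mul1r ?mul0r.
  apply/esym; apply: integral0_eq => y _.
  by rewrite /F /= indicE (negbTE xE) mul0r.
rewrite step1 (fubini_tonelli F mF F0).
set K := (t * pi / 2 - t ^+ 2 / 8)%R.
have K0 : (0 <= K)%R by rewrite /K; move: ht => /andP[? ?]; nra.
apply: (@le_trans _ _ (\int[s']_y ((K * \1_I y)%R)%:E)).
  apply: ge0_le_integral => //.
  - by move=> y _; apply: integral_ge0 => x _.
  - exact: (measurable_fun_fubini_tonelli_G F mF F0).
  - apply/measurable_EFinP; apply: measurable_funM; first exact: measurable_cst.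
    exact: measurable_indic.
  move=> y _; rewrite indicE; case: (boolP (y \in I)) => yI.
    rewrite mulr1.
    have -> : \int[mu]_x F (x, y) = \int[mu]_(x in E) (G x y)%:E.
      rewrite [RHS]integral_mkcond; apply: eq_integral => x _.
      rewrite /patch /F /= !indicE yI mul1r.
      by case: ifPn => _; rewrite ?mul1r ?mul0r.
    apply: per_y => //.
    by move: yI; rewrite inE /I /= in_itv.
  rewrite mulr0 integral0_eq // => x _.
  by rewrite /F /= !indicE (negbTE yI) mul0r mulr0.
under eq_integral => y _ do rewrite EFinM.
rewrite ge0_integralZl_EFin //; last by apply/measurable_EFinP; exact: measurable_indic.
rewrite integral_indic // setIT muleC; rewrite le_eqVlt; apply/orP; left; apply/eqP; congr (_ * _).
exact: (congr1 sigma (setIid I)).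

Qed.

End T.

Theorem lemma5p6 (R : realType)
  (sigma sigmash : {measure set (measurableTypeR R) -> \bar R}) :
  (* sigma is a finite Borel measure on (-pi,pi) *)
  sigma (~` `](- pi)%R, (pi : R)[%classic) = 0%E ->
  (sigma `](- pi)%R, (pi : R)[%classic < +oo)%E ->
  singular_lebesgue sigma ->
  (* sigmash = sigma((-pi,pi)) * delta_0 *)
  (forall A : set (measurableTypeR R), measurable A ->
     sigmash A = (sigma `](- pi)%R, (pi : R)[%classic * \d_(0%R : R) A)%E) ->
  forall t : R, 0 <= t <= 2 * pi ->
    (star (upot sigma) t <= star (upot sigmash) t)%E.
Proof.
move=> _ hfin _ hsh t ht.
apply: (@le_trans _ _ (sigma `](- pi)%R, (pi : R)[%classic * (t * pi / 2 - t ^+ 2 / 8)%:E)%E).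
  apply: ge_ereal_sup => _ [E [mE EJ muE] <-].
  exact: stepA.
apply: ereal_sup_ubound => /=.
exists `[(- (t / 2))%R, (t / 2)%R]%classic; last exact: stepB.
have P0 : (0 : R) < pi := pi_gt0 R.
move: ht => /andP[t0 t2].
split.
- exact: measurable_itv.
- by move=> x; rewrite /= !in_itv /= => /andP[? ?]; apply/andP; split; lra.
- rewrite lebesgue_measure_itv /= lte_fin; case: ifPn => h.
    by rewrite -EFinD; congr EFin; lra.
  have -> : t = 0%R by move: h; rewrite -leNgt => h; lra.
  done.

Qed.
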